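(* Let a binary game be given as described in the context, and suppose Assumption (A1) holds. Then a vector $(x_i,y_i)_{i\in I}$ is a Nash equilibrium of the binary game if and only if there exist vectors $\big(\widetilde y_i^{(1)},\widetilde y_i^{(0)},\widetilde\lambda_i^{(1)},\widetilde\lambda_i^{(0)},\kappa_i^{(1)},\kappa_i^{(0)}\big)_{i\in I}$ such that, with $\zeta_i^{(1)}=\zeta_i^{(0)}=0$ for all $i\in I$, the point $\big(x_i,y_i,\widetilde y_i^{(1)},\widetilde y_i^{(0)},\widetilde\lambda_i^{(1)},\widetilde\lambda_i^{(0)},\kappa_i^{(1)},\kappa_i^{(0)},\zeta_i^{(1)},\zeta_i^{(0)}\big)_{i\in I}$ is a feasible point of problem (P).
   Context: Binary game: players $i\in I=\{1,\dots,n\}$. Player $i$ chooses a binary variable $x_i\in\{0,1\}$ and a continuous vector $y_i\in\mathbb{R}^m$, and solves $\min_{x_i,y_i} f_i(x_i,y_i,y_{-i})$ subject to $g_i(x_i,y_i)\le 0$, where $g_i:\{0,1\}\times\mathbb{R}^m\to\mathbb{R}^k$, $y_{-i}=(y_j)_{j\ne i}$ are the rivals' continuous decisions (which depend on the rivals' binary decisions), and $K_i=\{(x_i,y_i): g_i(x_i,y_i)\le 0\}$. Nash equilibrium: a vector $((x_i^*,y_i^* )\in K_i)_{i\in I}$ such that for every $i$: (a) $y_i^*$ minimizes $f_i(x_i^*,\cdot,y_{-i}^* )$ over $\{y_i: g_i(x_i^*,y_i)\le0\}$; and (b) $f_i(x_i^*,y_i^*,y_{-i}^* )\le f_i(x_i^\times,y_i^\times,y_{-i}^*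 )$, where $x_i^\times=1-x_i^*$ and $y_i^\times$ minimizes $f_i(x_i^\times,\cdot,y_{-i}^* )$ over $\{y_i: g_i(x_i^\times,y_i)\le 0\}$. Assumption (A1): for each $i$ and each fixed value of $x_i$ (and fixed $y_{-i}$), the first-order (KKT) conditions of player $i$'s problem with respect to $y_i$ are necessary and sufficient for optimality, and the feasible region $\{y_i: g_i(x_i,y_i)\le 0\}$ is compact and non-empty. Problem (P): given a sufficiently large constant $\widetilde K>0$ (larger than the difference between any upper and lower bounds on each $y_i$ and than the difference between the maximum and minimum values of each $f_i$) and functions $F$ of $(x_i,y_i)_{i\in I}$ and $G$ of the compensation variables, minimize $F((x_i,y_i)_{i\in I})+G((\zeta_i^{(1)},\zeta_i^{(0)})_{i\in I})$ over $x_i\in\{0,1\}$, $y_i,\widetilde y_i^{(1)},\widetilde y_i^{(0)}\in\mathbb{R}^m$, $\widetilde\lambda_i^{(1)},\widetilde\lambda_i^{(0)}\in\mathbb{R}^k_+$, $\kappa_i^{(1)},\kappa_i^{(0)},\zeta_i^{(1)},\zeta_i^{(0)}\in\mathbb{R}_+$, subject to, for all $i\in I$ and both $b\in\{0,1\}$: $\nabla_{y_i} f_i(b,\widetilde y_i^{(b)},y_{-i})+(\widetilde\lambda_i^{(b)})^T\nabla_{y_i} g_i(b,\widetilde y_i^{(b)})=0$; $0\le -g_i(b,\widetilde y_i^{(b)})\perp \widetilde\lambda_i^{(b)}\ge 0$; $f_i(1,\widetilde y_i^{(1)},y_{-i})+\kappa_i^{(1)}-\zeta_i^{(1)}-\kappa_i^{(0)}+\zeta_i^{(0)}=f_i(0,\widetilde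 y_i^{(0)},y_{-i})$; $\kappa_i^{(1)}+\zeta_i^{(1)}\le x_i\widetilde K$; $\kappa_i^{(0)}+\zeta_i^{(0)}\le (1-x_i)\widetilde K$; $\widetilde y_i^{(0)}-x_i\widetilde K\le y_i\le \widetilde y_i^{(0)}+x_i\widetilde K$; $\widetilde y_i^{(1)}-(1-x_i)\widetilde K\le y_i\le \widetilde y_i^{(1)}+(1-x_i)\widetilde K$ (componentwise). *)

(* Defs.v *)
From HB Require Import structures.
From mathcomp Require Import all_boot all_order all_algebra.
From mathcomp Require Import all_classical all_reals all_analysis.
Set Implicit Arguments. Unset Strict Implicit. Unset Printing Implicit Defensive.
Import Order.TTheory GRing.Theory Num.Theory.
Import numFieldNormedType.Exports.
Local Open Scope classical_set_scope.
Local Open Scope ring_scope.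

(* A binary decision is a bool (true = 1, false = 0).  A profile of continuous
   decisions is yy : 'I_n -> 'rV[R]_m; f i b z yy is f_i(b, z, y_{-i}) where
   y_{-i} is read off from yy (the i-th entry of yy is ignored, see the
   hypothesis in the theorem).  g i b z : 'rV_k are the k constraints.
   gradf i b z yy : 'rV_m is the gradient of f_i w.r.t. y_i;
   gradg i b z : 'M_(k,m) is the Jacobian of g_i w.r.t. y_i (row l = gradient
   of the l-th constraint). *)

Definition bR {R : realType} (b : bool) : R := (b : nat)%:R.

Definition profile (R : realType) (n m : nat) := 'I_n -> 'rV[R]_m.

Definition feas {R : realType} {n m k : nat}
  (g : 'I_n -> bool -> 'rV[R]_m -> 'rV[R]_k) (i : 'I_n) (b : bool)
  (z : 'rV[R]_m) : Prop :=
  forall l : 'I_k, g i b z 0 l <= 0.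

Definition is_argmin {R : realType} {n m k : nat}
  (f : 'I_n -> bool -> 'rV[R]_m -> profile R n m -> R)
  (g : 'I_n -> bool -> 'rV[R]_m -> 'rV[R]_k)
  (i : 'I_n) (b : bool) (yy : profile R n m) (z : 'rV[R]_m) : Prop :=
  feas g i b z /\
  forall z' : 'rV[R]_m, feas g i b z' -> f i b z yy <= f i b z' yy.

Definition KKT {R : realType} {n m k : nat}
  (g : 'I_n -> bool -> 'rV[R]_m -> 'rV[R]_k)
  (gradf : 'I_n -> bool -> 'rV[R]_m -> profile R n m -> 'rV[R]_m)
  (gradg : 'I_n -> bool -> 'rV[R]_m -> 'M[R]_(k, m))
  (i : 'I_n) (b : bool) (yy : profile R n m)
  (z : 'rV[R]_m) (lam : 'rV[R]_k) : Prop :=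
  gradf i b z yy + lam *m gradg i b z = 0 /\
  (forall l : 'I_k, 0 <= - g i b z 0 l) /\
  (forall l : 'I_k, 0 <= lam 0 l) /\
  (forall l : 'I_k, (- g i b z 0 l) * lam 0 l = 0).

Definition nash_eq {R : realType} {n m k : nat}
  (f : 'I_n -> bool -> 'rV[R]_m -> profile R n m -> R)
  (g : 'I_n -> bool -> 'rV[R]_m -> 'rV[R]_k)
  (x : 'I_n -> bool) (y : profile R n m) : Prop :=
  forall i : 'I_n,
    feas g i (x i) (y i) /\
    is_argmin f g i (x i) y (y i) /\
    exists yx : 'rV[R]_m,
      is_argmin f g i (~~ x i) y yx /\
      f i (x i) (y i) y <= f i (~~ x i) yx y.

(* Feasibility of a point for problem (P).  The tilde-variables are indexed by
   the player i and by b in {1 (true), 0 (false)}. *)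
Definition feasible_P {R : realType} {n m k : nat}
  (f : 'I_n -> bool -> 'rV[R]_m -> profile R n m -> R)
  (g : 'I_n -> bool -> 'rV[R]_m -> 'rV[R]_k)
  (gradf : 'I_n -> bool -> 'rV[R]_m -> profile R n m -> 'rV[R]_m)
  (gradg : 'I_n -> bool -> 'rV[R]_m -> 'M[R]_(k, m))
  (Kt : R)
  (x : 'I_n -> bool) (y : profile R n m)
  (yt : 'I_n -> bool -> 'rV[R]_m) (lam : 'I_n -> bool -> 'rV[R]_k)
  (kap zeta : 'I_n -> bool -> R) : Prop :=
  forall i : 'I_n,
    (forall b : bool, KKT g gradf gradg i b y (yt i b) (lam i b)) /\
    (forall b : bool, 0 <= kap i b /\ 0 <= zeta i b) /\
    f i true (yt i true) y + kap i true - zeta i true - kap i false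
      + zeta i false = f i false (yt i false) y /\
    kap i true + zeta i true <= bR (x i) * Kt /\
    kap i false + zeta i false <= (1 - bR (x i)) * Kt /\
    (forall j : 'I_m,
       yt i false 0 j - bR (x i) * Kt <= y i 0 j /\
       y i 0 j <= yt i false 0 j + bR (x i) * Kt) /\
    (forall j : 'I_m,
       yt i true 0 j - (1 - bR (x i)) * Kt <= y i 0 j /\
       y i 0 j <= yt i true 0 j + (1 - bR (x i)) * Kt).

(* Main.v *)
Require Import Defs.
From HB Require Import structures.
From mathcomp Require Import all_boot all_order all_algebra.
From mathcomp Require Import all_classical all_reals all_analysis.
Import Order.TTheory GRing.Theory Num.Theory.
Import numFieldNormedType.Exports.
Local Open Scope classical_set_scope.
Local Open Scope ring_scope.


From mathcomp Require Import lra.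

Lemma bR1 (R : realType) : bR true = (1 : R).
Proof. by rewrite /bR /=. Qed.
Lemma bR0 (R : realType) : bR false = (0 : R).
Proof. by rewrite /bR /=. Qed.

Lemma dist_bounds {R : realType} (a b K : R) : `|a - b| < K -> b - K <= a /\ a <= b + K.
Proof. rewrite ltr_norml => /andP [h1 h2]; split; lra. Qed.

Lemma norm_bound {R : realType} (a K : R) : `|a| < K -> a <= K.
Proof. rewrite ltr_norml => /andP [h1 h2]; lra. Qed.

Definition Pi {R : realType} {n m k : nat}
  (f : 'I_n -> bool -> 'rV[R]_m -> profile R n m -> R)
  (g : 'I_n -> bool -> 'rV[R]_m -> 'rV[R]_k)
  (gradf : 'I_n -> bool -> 'rV[R]_m -> profile R n m -> 'rV[R]_m)
  (gradg : 'I_n -> bool -> 'rV[R]_m -> 'M[R]_(k, m))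
  (Kt : R) (x : 'I_n -> bool) (y : profile R n m) (i : 'I_n)
  (yt : bool -> 'rV[R]_m) (lam : bool -> 'rV[R]_k) (kap : bool -> R) : Prop :=
    (forall b : bool, KKT g gradf gradg i b y (yt b) (lam b)) /\
    (forall b : bool, 0 <= kap b /\ 0 <= (0:R)) /\
    f i true (yt true) y + kap true - 0 - kap false
      + 0 = f i false (yt false) y /\
    kap true + 0 <= bR (x i) * Kt /\
    kap false + 0 <= (1 - bR (x i)) * Kt /\
    (forall j : 'I_m,
       yt false 0 j - bR (x i) * Kt <= y i 0 j /\
       y i 0 j <= yt false 0 j + bR (x i) * Kt) /\
    (forall j : 'I_m,
       yt true 0 j - (1 - bR (x i)) * Kt <= y i 0 j /\
       y i 0 j <= yt true 0 j + (1 - bR (x i)) * Kt).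

Theorem theorem1 (R : realType) (n m k : nat)
  (f : 'I_n -> bool -> 'rV[R]_m -> profile R n m -> R)
  (g : 'I_n -> bool -> 'rV[R]_m -> 'rV[R]_k)
  (gradf : 'I_n -> bool -> 'rV[R]_m -> profile R n m -> 'rV[R]_m)
  (gradg : 'I_n -> bool -> 'rV[R]_m -> 'M[R]_(k, m))
  (Kt : R)
  (* f_i depends on the profile only through the rivals' decisions y_{-i} *)
  (Hrivals : forall (i : 'I_n) (b : bool) (z : 'rV[R]_m) (yy yy' : profile R n m),
      (forall j : 'I_n, j != i -> yy j = yy' j) -> f i b z yy = f i b z yy')
  (* gradf, gradg are the gradients / Jacobian w.r.t. the own variable y_i *)
  (Hgradf : forall (i : 'I_n) (b : bool) (yy : profile R n m) (z : 'rV[R]_m),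
      differentiable (fun w : 'rV[R]_m => f i b w yy) z /\
      forall j : 'I_m,
        gradf i b z yy 0 j = 'D_(delta_mx 0 j) (fun w : 'rV[R]_m => f i b w yy) z)
  (Hgradg : forall (i : 'I_n) (b : bool) (z : 'rV[R]_m) (l : 'I_k),
      differentiable (fun w : 'rV[R]_m => g i b w 0 l) z /\
      forall j : 'I_m,
        gradg i b z l j = 'D_(delta_mx 0 j) (fun w : 'rV[R]_m => g i b w 0 l) z)
  (* Assumption (A1) *)
  (HA1 : forall (i : 'I_n) (b : bool) (yy : profile R n m),
      (exists z : 'rV[R]_m, feas g i b z) /\
      compact [set z : 'rV[R]_m | feas g i b z] /\
      (forall z : 'rV[R]_m,
         is_argmin f g i b yy z <->
         exists lam : 'rV[R]_k, KKT g gradf gradg i b yy z lam))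
  (* Kt is a sufficiently large positive constant *)
  (HKpos : 0 < Kt)
  (HKy : forall (i : 'I_n) (b b' : bool) (z z' : 'rV[R]_m),
      feas g i b z -> feas g i b' z' ->
      forall j : 'I_m, `|z 0 j - z' 0 j| < Kt)
  (HKf : forall (i : 'I_n) (b b' : bool) (z z' : 'rV[R]_m) (yy : profile R n m),
      (forall j : 'I_n, exists bj : bool, feas g j bj (yy j)) ->
      feas g i b z -> feas g i b' z' ->
      `|f i b z yy - f i b' z' yy| < Kt)
  (x : 'I_n -> bool) (y : profile R n m) :
  nash_eq f g x y <->
  exists (yt : 'I_n -> bool -> 'rV[R]_m) (lam : 'I_n -> bool -> 'rV[R]_k)
         (kap : 'I_n -> bool -> R),
    feasible_P f g gradf gradg Kt x y yt lam kap (fun _ _ => 0).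
Proof.
have Eargmin : forall i b z, is_argmin f g i b y z <-> exists lam, KKT g gradf gradg i b y z lam.
  by move=> i b z; exact: ((HA1 i b y).2.2 z).
split.
- move=> Hn.
  have Hall : forall j : 'I_n, exists bj : bool, feas g j bj (y j).
    by move=> j; exists (x j); exact: (Hn j).1.
  have Hi : forall i, exists t : ((bool -> 'rV[R]_m) * (bool -> 'rV[R]_k)) * (bool -> R),
      Pi f g gradf gradg Kt x y i t.1.1 t.1.2 t.2.
    move=> i.
    have [Hfe [Ham [yx [Hamx Hle]]]] := Hn i.
    have Hfx := Hamx.1.
    case/Eargmin: Ham => l1 Hl1.
    case/Eargmin: Hamx => l0 Hl0.
    rewrite /Pi.
    move: Hfe Hle Hfx Hl1 Hl0; case: (x i) => /= Hfe Hle Hfx Hl1 Hl0.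
    + exists ((fun b => if b then y i else yx), (fun b => if b then l1 else l0),
              (fun b => if b then f i false yx y - f i true (y i) y else 0)) => /=.
      rewrite bR1.
      have hK := norm_bound _ _ (HKf i false true yx (y i) y Hall Hfx Hfe).
      split; first by case.
      split; first by case; split; lra.
      split; first lra.
      split; first lra.
      split; first lra.
      split.
        move=> j; have := dist_bounds _ _ _ (HKy i true false (y i) yx Hfe Hfx j); lra.
      move=> j; lra.
    + exists ((fun b => if b then yx else y i), (fun b => if b then l0 else l1),
              (fun b => if b then 0 else f i true yx y - f i false (y i) y)) => /=.
      rewrite bR0.
      have hK := norm_bound _ _ (HKf i true false yx (y i) y Hall Hfx Hfe).
      split; first by case.
      split; first by case; split; lra.
      split; first lra.
      split; first lra.
      split; first lra.
      split.
        move=> j; lra.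
      move=> j; have := dist_bounds _ _ _ (HKy i false true (y i) yx Hfe Hfx j); lra.
  case: (choice Hi) => F HF.
  exists (fun i => (F i).1.1), (fun i => (F i).1.2), (fun i => (F i).2).
  move=> i; exact: (HF i).
- case=> yt [lam [kap HP]] i.
  have [HK [Hnn [Heq [Hk1 [Hk0 [Hy0 Hy1]]]]]] := HP i.
  have Ham : forall b, is_argmin f g i b y (yt i b).
    by move=> b; apply/Eargmin; exists (lam i b).
  have [n1 _] := Hnn true.
  have [n0 _] := Hnn false.
  move: Hk1 Hk0 Hy0 Hy1; case Hx: (x i) => /= Hk1 Hk0 Hy0 Hy1.
  + rewrite bR1 in Hk1 Hk0 Hy0 Hy1.
    have Eyi : y i = yt i true.
      apply/rowP => j; have := Hy1 j => -[a b]; apply/eqP; rewrite eq_le; apply/andP; split; lra.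
    rewrite Eyi.
    split; first exact: (Ham true).1.
    split; first exact: Ham.
    exists (yt i false); split; first exact: Ham.
    lra.
  + rewrite bR0 in Hk1 Hk0 Hy0 Hy1.
    have Eyi : y i = yt i false.
      apply/rowP => j; have := Hy0 j => -[a b]; apply/eqP; rewrite eq_le; apply/andP; split; lra.
    rewrite Eyi.
    split; first exact: (Ham false).1.
    split; first exact: Ham.
    exists (yt i true); split; first exact: Ham.
    lra.
Qed.
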